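(* Let $a,c\ge 1$ be integers with $a\neq c$. Then $U=\{(a,0),(c,0)\}\subseteq\mathcal{B}$ is unavoidable.
   Context: The bicyclic inverse semigroup is $\mathcal{B}=\{(a,b)\in\mathbb{Z}\times\mathbb{Z}\mid a\ge 0,\ a+b\ge 0\}$ with multiplication $(a,b)(c,d)=(\max\{c+d,a\}-d,\ b+d)$. A subset $U\subseteq\mathcal{B}$ is called avoidable if $\mathcal{B}$ can be partitioned into two subsets $A$ and $B$ such that no element of $U$ can be written as a product $xy$ of two distinct elements $x\neq y$ both in $A$, or both in $B$. A set is unavoidable if it is not avoidable. *)

(* Defs.v *)
From Stdlib Require Import ZArith.
Open Scope Z_scope.

Definition inB (x : Z * Z) : Prop := 0 <= fst x /\ 0 <= fst x + snd x.

Definition bmul (x y : Z * Z) : Z * Z :=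
  (Z.max (fst y + snd y) (fst x) - snd y, snd x + snd y).

(* U is avoidable if B can be partitioned into two classes (given by a
   2-colouring `col` of the elements of B: class A = col true, class B = col false)
   such that no element of U is a product x y of two distinct elements of B
   lying in the same class. *)
Definition avoidable (U : Z * Z -> Prop) : Prop :=
  exists col : Z * Z -> bool,
    forall x y : Z * Z, inB x -> inB y -> x <> y -> col x = col y ->
      ~ U (bmul x y).

Definition unavoidable (U : Z * Z -> Prop) : Prop := ~ avoidable U.

(* Main.v *)
Require Import Defs.
From Stdlib Require Import ZArith Lia.
Open Scope Z_scope.

Theorem corollary5p2 (a c : Z) (ha : 1 <= a) (hc : 1 <= c) (hac : a <> c) :
  unavoidable (fun u => u = (a, 0) \/ u = (c, 0)).
Proof.
  intros [col H].
  assert (Hb : forall n, 0 <= n -> inB (n, 0)) by (intros n Hn; unfold inB; simpl; lia).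
  destruct (Bool.bool_dec (col (a,0)) (col (c,0))) as [E|E].
  - apply (H (a,0) (c,0)); auto with zarith.
    + intro Q; inversion Q; lia.
    + unfold bmul; simpl. destruct (Z.max_spec (c+0) a) as [[_ ->]|[_ ->]];
      [left|right]; f_equal; lia.
  - destruct (col (0,0)) eqn:E0, (col (a,0)) eqn:Ea, (col (c,0)) eqn:Ec;
      try congruence.
    + apply (H (0,0) (a,0)); auto with zarith.
      * intro Q; inversion Q; lia.
      * congruence.
      * left; unfold bmul; simpl; f_equal; lia.
    + apply (H (0,0) (c,0)); auto with zarith.
      * intro Q; inversion Q; lia.
      * congruence.
      * right; unfold bmul; simpl; f_equal; lia.
    + apply (H (0,0) (c,0)); auto with zarith.
      * intro Q; inversion Q; lia.
      * congruence.
      * right; unfold bmul; simpl; f_equal; lia.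
    + apply (H (0,0) (a,0)); auto with zarith.
      * intro Q; inversion Q; lia.
      * congruence.
      * left; unfold bmul; simpl; f_equal; lia.
Qed.
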